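(* Let $G$ be a graph, $V(G)=V_1\uplus\dots\uplus V_\ell$ a partition, $Z\subseteq V(G)$, and let $(\mathfrak T,\gamma)$ be the rooted decomposition of $G-Z$ into $2$-connected components. If $I_1,I_2$ are two distinct segments, then $B_Z(I_1)\cap B_Z(I_2)=\emptyset$.
   Context: A graph is 2-connected if it is connected and has no cut vertex (so $K_1$ and $K_2$ count as 2-connected); a 2-connected component of a graph is an inclusion-maximal vertex set inducing a 2-connected subgraph. Rooted decomposition: $\mathfrak T$ is a forest whose nodes $t$ correspond to the 2-connected components $\gamma(t)\subseteq V(G)\setminus Z$ of $G-Z$; it is obtained from the block-cut forest of $G-Z$ by fixing, in each connected component, a root block (say the lexicographically smallest), and letting the parent of a non-root block $C$ be the block containing the cut vertex that separates $C$ from the root (i.e. the grandparent of $C$ in the rooted block-cut forest). An $i$-segment is a connected component of $G[V_i\setminus Z]$; a segment is an $i$-segment for some $i$. For a segment $I$, $r_Z(I)$ is the unique node $t$ of $\mathfrak T$ closest to a root with $I\cap\gamma(t)\neq\emptyset$, and the body is $B_Z(I)=\{t\in V(\mathfrak T)\setminus\{r_Z(I)\}: I\cap\gamma(t)\ne\emptyset\}$. *)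

(* Defs.v *)
From mathcomp Require Import all_boot.
Set Implicit Arguments. Unset Strict Implicit. Unset Printing Implicit Defensive.

Section Defs.
Variable T : finType.
Variable e : rel T.

Definition rel_in (S : {set T}) : rel T :=
  fun x y => [&& x \in S, y \in S & e x y].
Definition conn_in (S : {set T}) (x y : T) : bool := connect (rel_in S) x y.
Definition connected_in (S : {set T}) : bool :=
  (S != set0) && [forall x in S, forall y in S, conn_in S x y].
Definition cut_vertex (S : {set T}) (v : T) : bool :=
  (v \in S) && [exists x in S :\ v, exists y in S :\ v, ~~ conn_in (S :\ v) x y].
(* G[S] is 2-connected: connected with no cut vertex (K1, K2 count) *)
Definition two_connected (S : {set T}) : bool :=
  connected_in S && [forall v, ~~ cut_vertex S v].

(* C is a 2-connected component of G - Z: inclusion-maximal vertex set of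
   V(G) \ Z inducing a 2-connected subgraph *)
Definition block (Z C : {set T}) : bool :=
  [&& C \subset ~: Z, two_connected C &
      [forall D : {set T},
         [&& D \subset ~: Z, two_connected D & C \subset D] ==> (D == C)]].

Definition same_comp (Z C R : {set T}) : bool :=
  [exists x in C, exists y in R, conn_in (~: Z) x y].

Definition valid_roots (Z : {set T}) (Rt : {set {set T}}) : bool :=
  [forall R in Rt, block Z R] &&
  [forall C, block Z C ==> (#|[set R in Rt | same_comp Z C R]| == 1)].

Definition root_of (Z : {set T}) (Rt : {set {set T}}) (C : {set T}) : {set T} :=
  odflt set0 [pick R in Rt | same_comp Z C R].

Definition sep_vertex (Z R C : {set T}) (c : T) : bool :=
  [&& c \in C, C :\ c != set0, R :\ c != set0 &
      [forall x in C :\ c, forall y in R :\ c, ~~ conn_in ((~: Z) :\ c) x y]].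

(* P is the parent of the non-root block C in the rooted decomposition:
   P is the block (other than C) containing the separating cut vertex c
   that lies on the root side of c (the grandparent of C in the rooted
   block-cut forest) *)
Definition tparent (Z : {set T}) (Rt : {set {set T}}) (C P : {set T}) : bool :=
  [&& block Z C, C \notin Rt, block Z P, P != C &
      [exists c, [&& sep_vertex Z (root_of Z Rt C) C c, c \in P &
         [exists x in P :\ c, exists y in root_of Z Rt C :\ c,
            conn_in ((~: Z) :\ c) x y]]]].

Definition tpar (Z : {set T}) (Rt : {set {set T}}) (C : {set T}) : option {set T} :=
  [pick P | tparent Z Rt C P].

(* depth of node C in the forest = number of parent steps to reach a root *)
Definition depth (Z : {set T}) (Rt : {set {set T}}) (C : {set T}) : nat :=
  find (fun n => iter n.+1 (obind (tpar Z Rt)) (Some C) == None)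
       (iota 0 #|{set T}|).

Definition meets (I C : {set T}) : bool := I :&: C != set0.

Definition rZ (Z : {set T}) (Rt : {set {set T}}) (I : {set T}) : option {set T} :=
  [pick t | [&& block Z t, meets I t &
     [forall t', (block Z t' && meets I t') ==> (depth Z Rt t <= depth Z Rt t')]]].

Definition body (Z : {set T}) (Rt : {set {set T}}) (I : {set T}) : {set {set T}} :=
  [set t | [&& block Z t, meets I t & Some t != rZ Z Rt I]].

Definition segment (l : nat) (part : T -> 'I_l) (Z I : {set T}) : bool :=
  [exists i : 'I_l,
     let Si := [set v | part v == i] :\: Z in
     [exists x in Si, I == [set y in Si | conn_in Si x y]]].

End Defs.

(* Main.v *)
Require Import Defs.
From mathcomp Require Import all_boot.
Set Implicit Arguments. Unset Strict Implicit. Unset Printing Implicit Defensive.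

Section G.
Variable T : finType.
Variable e : rel T.
Hypothesis e_sym : symmetric e.
Hypothesis e_irr : irreflexive e.

Local Notation conn := (conn_in e).
Implicit Types (S A B D K C P Q R : {set T}) (x y z w u v c : T).

Lemma rel_in_sym S : symmetric (rel_in e S).
Proof. by move=> x y; rewrite /rel_in e_sym andbCA. Qed.

Lemma conn_sym S x y : conn S x y = conn S y x.
Proof. by rewrite /conn_in (sym_connect_sym (@rel_in_sym S)). Qed.

Lemma conn_trans S x y z : conn S x y -> conn S y z -> conn S x z.
Proof. exact: connect_trans. Qed.

Lemma conn_refl S x : conn S x x.
Proof. exact: connect0. Qed.

Lemma conn_sub S S' x y : S \subset S' -> conn S x y -> conn S' x y.
Proof.
move=> sS; apply: connect_sub => u v /and3P[uS vS euv].
by apply: connect1; rewrite /rel_in (subsetP sS _ uS) (subsetP sS _ vS).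
Qed.

Lemma conn_edge S x y : x \in S -> y \in S -> e x y -> conn S x y.
Proof. by move=> xS yS exy; apply: connect1; rewrite /rel_in xS yS. Qed.

Lemma path_in S x p : path (rel_in e S) x p -> x \in S \/ p = [::].
Proof. by case: p => [|a p] /=; [right|case/andP=> /and3P[]; left]. Qed.

Lemma conn_memr S x y : conn S x y -> x != y -> y \in S.
Proof.
move=> /connectP[p pp ->]; elim: p x pp => [|a p IH] x /=; first by rewrite eqxx.
case/andP=> /and3P[_ aS _] pp _; case: (eqVneq a (last a p)) => [<-//|].
exact: IH.
Qed.

Lemma conn_meml S x y : conn S x y -> x != y -> x \in S.
Proof. by rewrite conn_sym eq_sym; apply: conn_memr. Qed.

Lemma conn_restrict S A x y :
  conn S x y -> (forall w, conn S x w -> w \in A) -> conn (S :&: A) x y.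
Proof.
move=> /connectP[p pp ->]; elim: p x pp => [|a p IH] x /=; first by rewrite conn_refl.
case/andP=> /and3P[xS aS exa] pp hA.
have xa : conn S x a by apply: conn_edge.
apply: (@conn_trans _ _ a); last first.
  apply: IH => // w aw; apply: hA; exact: conn_trans aw.
apply: conn_edge => //; rewrite !inE ?xS ?aS /=.
  apply: hA => //; exact: conn_refl.
apply: hA; exact: xa.
Qed.

Lemma cross (r : rel T) (P : pred T) a b :
  connect r a b -> P a -> ~~ P b -> exists u w, [/\ r u w, P u & ~~ P w].
Proof.
move=> /connectP[p pp ->]; elim: p a pp => [|x p IH] a /=; first by move=> _ ->.
case/andP=> rax pp Pa NP; case Px: (P x); first exact: (IH x pp Px NP).
by exists a, x; rewrite Px.
Qed.


Lemma tc_ne S : two_connected e S -> S != set0.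
Proof. by case/andP=> /andP[]. Qed.

Lemma tc_conn S x y : two_connected e S -> x \in S -> y \in S -> conn S x y.
Proof.
by case/andP=> /andP[_ /forallP/(_ x)/implyP H] _ xS yS; move/(_ xS)/forallP/(_ y)/implyP: H; apply.
Qed.

Lemma tc_del S v x y :
  two_connected e S -> x \in S :\ v -> y \in S :\ v -> conn (S :\ v) x y.
Proof.
move=> tS; have := tS; case/andP=> _ /forallP/(_ v); rewrite /cut_vertex negb_and.
case/orP=> [vS | /existsPn H] xv yv.
  move: xv yv; rewrite !inE => /andP[_ xS] /andP[_ yS].
  apply: (@conn_sub S); last by apply: tc_conn.
  apply/subsetP => w wS; rewrite !inE wS andbT; apply/eqP => wv; by rewrite -wv wS in vS.
have := H x; rewrite xv /= => /existsPn /(_ y); rewrite yv /= negbK; exact.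
Qed.

Lemma hub_conn S h : (forall x, x \in S -> conn S x h) ->
  forall x y, x \in S -> y \in S -> conn S x y.
Proof.
move=> H x y xS yS; apply: (conn_trans (H x xS)); rewrite conn_sym; exact: H.
Qed.

Lemma tc_intro S : S != set0 ->
  (forall x y, x \in S -> y \in S -> conn S x y) ->
  (forall v x y, v \in S -> x \in S :\ v -> y \in S :\ v -> conn (S :\ v) x y) ->
  two_connected e S.
Proof.
move=> S0 H1 H2; apply/andP; split.
  rewrite /connected_in S0 /=; apply/forallP => x; apply/implyP => xS.
  by apply/forallP => y; apply/implyP => yS; apply: H1.
apply/forallP => v; rewrite /cut_vertex; apply/negP => /andP[vS /existsP[x /andP[xv /existsP[y /andP[yv /negP]]]]].
by apply; apply: H2.
Qed.

Lemma tc1 v : two_connected e [set v].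
Proof.
apply: tc_intro; first by apply/set0Pn; exists v; rewrite inE.
  by move=> x y; rewrite !inE => /eqP-> /eqP->; apply: conn_refl.
by move=> w x y; rewrite !inE => /eqP-> /andP[/negP xv /eqP xe]; case: xv; apply/eqP.
Qed.

Lemma tc2 a b : e a b -> two_connected e [set a; b].
Proof.
move=> eab; have ab : a != b by apply: contraTneq eab => ->; rewrite e_irr.
have K S x y : x \in [set a; b] -> y \in [set a; b] -> x \in S -> y \in S -> conn S x y.
  rewrite !inE => /orP[]/eqP-> /orP[]/eqP-> aS bS; rewrite ?conn_refl //.
    exact: conn_edge.
  by rewrite conn_sym; apply: conn_edge.
apply: tc_intro; first by apply/set0Pn; exists a; rewrite !inE eqxx.
  by move=> x y xS yS; apply: K.
move=> v x y vS xv yv; case: (eqVneq x y) => [->|xy]; first exact: conn_refl.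
apply: (K _ _ _ _ _ xv yv); [move: xv | move: yv]; rewrite !inE => /andP[_ ->] //.
Qed.

Lemma tcU S1 S2 a b : two_connected e S1 -> two_connected e S2 ->
  a \in S1 -> a \in S2 -> b \in S1 -> b \in S2 -> a != b -> two_connected e (S1 :|: S2).
Proof.
move=> t1 t2 a1 a2 b1 b2 ab.
apply: tc_intro.
- by apply/set0Pn; exists a; rewrite inE a1.
- apply: (@hub_conn _ a) => x; rewrite inE => /orP[] xS.
    by apply: (@conn_sub S1); [apply: subsetUl | apply: tc_conn].
  by apply: (@conn_sub S2); [apply: subsetUr | apply: tc_conn].
- move=> v x y _; pose h := if a == v then b else a.
  have h1 : h \in S1 :\ v by rewrite /h; case: eqVneq => [<-|]; rewrite !inE ?a1 ?b1 1?eq_sym ?ab // => ->.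
  have h2 : h \in S2 :\ v by rewrite /h; case: eqVneq => [<-|]; rewrite !inE ?a2 ?b2 1?eq_sym ?ab // => ->.
  have sub1 : S1 :\ v \subset (S1 :|: S2) :\ v by apply: setSD; apply: subsetUl.
  have sub2 : S2 :\ v \subset (S1 :|: S2) :\ v by apply: setSD; apply: subsetUr.
  apply: (@hub_conn _ h) => z; rewrite !inE => /andP[zv /orP[] zS].
    by apply: (conn_sub sub1); apply: tc_del => //; rewrite !inE zv.
  by apply: (conn_sub sub2); apply: tc_del => //; rewrite !inE zv.
Qed.


Lemma path_conn S x p z : path e x p -> (forall w, w \in x :: p -> w \in S) ->
  z \in x :: p -> conn S x z /\ conn S z (last x p).
Proof.
elim: p x z => [|a p IH] x z /=.
  by move=> _ _; rewrite inE => /eqP->; split; apply: conn_refl.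
case/andP=> exa pp sub; have xa : conn S x a.
  by apply: conn_edge => //; apply: sub; rewrite !inE eqxx ?orbT.
have sub' : forall w, w \in a :: p -> w \in S by move=> w wp; apply: sub; rewrite inE wp orbT.
rewrite inE => /orP[/eqP->|zp].
  by split; [apply: conn_refl | apply: (conn_trans xa); exact: (proj2 (IH a a pp sub' (mem_head _ _)))].
have [az zl] := IH a z pp sub' zp; split => //; exact: conn_trans az.
Qed.

Lemma path_rel S x p : path (rel_in e S) x p -> path e x p /\ all (fun w => w \in S) p.
Proof.
elim: p x => [|a p IH] x //= /andP[/and3P[_ aS exa] /IH[]] -> ->.
by rewrite exa aS.
Qed.

Lemma path_split S x p v z : path e x p -> uniq (x :: p) ->
  (forall w, w \in x :: p -> w \in S) -> z \in x :: p -> z != v ->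
  conn (S :\ v) z x \/ conn (S :\ v) z (last x p).
Proof.
elim: p x z => [|a p IH] x z /=.
  by move=> _ _ _; rewrite inE => /eqP-> _; left; apply: conn_refl.
case/andP=> exa pp /andP[xnp up] sub; rewrite inE => /orP[/eqP-> _|zp zv].
  by left; apply: conn_refl.
have sub' : forall w, w \in a :: p -> w \in S by move=> w wp; apply: sub; rewrite inE wp orbT.
case: (eqVneq x v) => [xv|xv].
  right; apply: (proj2 (@path_conn _ a p z pp _ zp)) => w wp.
  by rewrite !inE sub' // andbT; apply: contraNneq xnp => wv; rewrite xv -wv.
have [zx|] := IH a z pp up sub' zp zv; last by right.
left; apply: (conn_trans zx); have av : a != v.
  case: (eqVneq z a) => [<-//|za]; have := conn_memr zx za; rewrite !inE => /andP[] //.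
apply: conn_edge; last by rewrite e_sym.
  by rewrite !inE av sub // !inE eqxx orbT.
by rewrite !inE xv sub // !inE eqxx.
Qed.

Lemma ear S1 S2 c x p : two_connected e S1 -> two_connected e S2 ->
  c \in S1 -> c \in S2 -> x \in S1 -> path e x p -> uniq (x :: p) ->
  c \notin x :: p -> last x p \in S2 ->
  two_connected e (S1 :|: S2 :|: [set w in x :: p]).
Proof.
move=> t1 t2 c1 c2 x1 pp up cp l2.
set K := S1 :|: S2 :|: _.
have s1K : S1 \subset K by apply/subsetP => w wS; rewrite /K !inE wS.
have s2K : S2 \subset K by apply/subsetP => w wS; rewrite /K !inE wS !orbT.
have spK w : w \in x :: p -> w \in K by move=> wp; apply/setUP; right; rewrite in_set.
have lp : last x p \in x :: p by apply: mem_last.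
apply: tc_intro.
- by apply/set0Pn; exists c; rewrite /K !inE c1.
- apply: (@hub_conn _ c) => z; rewrite /K !inE => /orP[/orP[] zS | zp].
  + by apply: (conn_sub s1K); apply: tc_conn.
  + by apply: (conn_sub s2K); apply: tc_conn.
  + rewrite conn_sym; apply: (conn_trans (conn_sub s1K (tc_conn t1 c1 x1))).
    by apply: (proj1 (path_conn pp spK zp)).
- move=> v x' y' _; case: (eqVneq v c) => [->|vc].
  + have sub1 : S1 :\ c \subset K :\ c by apply: setSD.
    have sub2 : S2 :\ c \subset K :\ c by apply: setSD.
    have spK' w : w \in x :: p -> w \in K :\ c.
      by move=> wp; rewrite in_setD1 spK // andbT; apply: contraNneq cp => <-.
    have xc : x \in S1 :\ c by rewrite !inE x1 andbT; apply: contraNneq cp => <-; apply: mem_head.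
    have lc : last x p \in S2 :\ c by rewrite !inE l2 andbT; apply: contraNneq cp => <-.
    apply: (@hub_conn _ x) => z; rewrite !inE => /andP[zc /orP[/orP[] zS | zp]].
    * by apply: (conn_sub sub1); apply: tc_del => //; rewrite !inE zc.
    * apply: (conn_trans (conn_sub sub2 (tc_del (y := last x p) t2 _ lc))); first by rewrite !inE zc.
      by rewrite conn_sym; apply: (proj2 (path_conn pp spK' (mem_head _ _))).
    * by rewrite conn_sym; apply: (proj1 (path_conn pp spK' zp)).
  + have sub1 : S1 :\ v \subset K :\ v by apply: setSD.
    have sub2 : S2 :\ v \subset K :\ v by apply: setSD.
    have cv1 : c \in S1 :\ v by rewrite !inE c1 andbT eq_sym.
    have cv2 : c \in S2 :\ v by rewrite !inE c2 andbT eq_sym.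
    apply: (@hub_conn _ c) => z; rewrite !inE => /andP[zv /orP[/orP[] zS | zp]].
    * by apply: (conn_sub sub1); apply: tc_del => //; rewrite !inE zv.
    * by apply: (conn_sub sub2); apply: tc_del => //; rewrite !inE zv.
    * have [zx|zl] := path_split pp up spK zp zv.
        have xv : x \in S1 :\ v.
          rewrite !inE x1 andbT; case: (eqVneq z x) => [<-//|zx'].
          by have := conn_memr zx zx'; rewrite !inE => /andP[].
        by apply: (conn_trans zx); apply: (conn_sub sub1); apply: tc_del.
      have lv : last x p \in S2 :\ v.
        rewrite !inE l2 andbT; case: (eqVneq z (last x p)) => [<-//|zx'].
        by have := conn_memr zl zx'; rewrite !inE => /andP[].
      by apply: (conn_trans zl); apply: (conn_sub sub2); apply: tc_del.
Qed.


Variable Z : {set T}.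
Local Notation V := (~: Z).

Lemma block_sub B : block e Z B -> B \subset V.
Proof. by case/and3P. Qed.

Lemma block_tc B : block e Z B -> two_connected e B.
Proof. by case/and3P. Qed.

Lemma block_max B D : block e Z B -> D \subset V -> two_connected e D -> B \subset D -> D = B.
Proof.
case/and3P=> _ _ /forallP/(_ D)/implyP H DV tD BD; apply/eqP; apply: H.
by rewrite DV tD BD.
Qed.

Lemma block_exists S : S \subset V -> two_connected e S -> exists B, block e Z B /\ S \subset B.
Proof.
move=> SV tS.
pose P (D : {set T}) := [&& D \subset V, two_connected e D & S \subset D].
have PS : P S by rewrite /P SV tS subxx.
case: (@arg_maxnP _ S P (fun D => #|D|) PS) => B /and3P[BV tB SB] Bmax.
exists B; split => //; rewrite /block BV tB /=; apply/forallP => D; apply/implyP.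
case/and3P=> DV tD BD; rewrite eq_sym eqEcard BD /=.
apply: Bmax; rewrite /P DV tD /=; exact: subset_trans SB BD.
Qed.

Lemma blockL B1 B2 c x y : block e Z B1 -> block e Z B2 -> c \in B1 -> c \in B2 ->
  x \in B1 :\ c -> y \in B2 :\ c -> conn (V :\ c) x y -> B1 = B2.
Proof.
move=> b1 b2 c1 c2 xB yB /connectP[p pp yl]; subst y.
have [pe /allP pV] := path_rel pp.
move: yB; case: (shortenP pe) => p' pe' up' sub' yB.
have xc : x != c by move: xB; rewrite !inE => /andP[].
have cp : c \notin x :: p'.
  rewrite inE negb_or eq_sym xc /=; apply/negP => /sub' /pV; by rewrite !inE eqxx.
have x1 : x \in B1 by move: xB; rewrite !inE => /andP[].
have y2 : last x p' \in B2 by move: yB; rewrite !inE => /andP[].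
have tK := ear (block_tc b1) (block_tc b2) c1 c2 x1 pe' up' cp y2.
set K := _ :|: _ in tK.
have KV : K \subset V.
  apply/subsetP => w; rewrite /K !in_setU => /orP[/orP[] wB|].
  - exact: subsetP (block_sub b1) w wB.
  - exact: subsetP (block_sub b2) w wB.
  rewrite in_set inE => /orP[/eqP->|/sub' /pV]; first exact: subsetP (block_sub b1) x x1.
  by rewrite !inE => /andP[].
have B1K : B1 \subset K by apply/subsetP => w wB; rewrite /K !in_setU wB.
have B2K : B2 \subset K by apply/subsetP => w wB; rewrite /K !in_setU wB orbT.
have KB1 := block_max b1 KV tK B1K.
rewrite KB1 in B2K.
exact: block_max b2 (block_sub b1) (block_tc b1) B2K.
Qed.


Lemma block_conn B x y : block e Z B -> x \in B -> y \in B -> conn V x y.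
Proof. by move=> b xB yB; apply: (conn_sub (block_sub b)); apply: tc_conn (block_tc b) xB yB. Qed.

Lemma block_n0 B : block e Z B -> exists x, x \in B.
Proof. by move=> b; apply/set0Pn; apply: tc_ne (block_tc b). Qed.

Variable Rt : {set {set T}}.
Hypothesis hRt : valid_roots e Z Rt.

Local Notation root := (root_of e Z Rt).

Lemma root_block R : R \in Rt -> block e Z R.
Proof. by case/andP: hRt => /forallP H _ RR; move/implyP: (H R); apply. Qed.

Lemma root_spec C : block e Z C ->
  [/\ root C \in Rt, same_comp e Z C (root C) &
      forall R, R \in Rt -> same_comp e Z C R -> R = root C].
Proof.
move=> bC; case/andP: hRt => _ /forallP/(_ C)/implyP/(_ bC)/cards1P[R0 HR0].
have mem R : (R \in Rt) && same_comp e Z C R = (R == R0).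
  by rewrite -in_set1 -HR0 inE.
rewrite /root_of; case: pickP => [R /= HR | none]; last first.
  by have := none R0; rewrite /= mem eqxx.
move: (HR); rewrite mem => /eqP RR0; subst R; case/andP: HR => h1 h2; split => //.
by move=> R' R'R sc; apply/eqP; rewrite -mem R'R sc.
Qed.

Lemma comp_root C D u w : block e Z C -> block e Z D -> u \in C -> w \in D ->
  conn V u w -> root C = root D.
Proof.
move=> bC bD uC wD uw; have [RR /existsP[x /andP[xC /existsP[y /andP[yR xy]]]] _] := root_spec bC.
have [_ _ uniq] := root_spec bD; apply: uniq => //.
apply/existsP; exists w; rewrite wD; apply/existsP; exists y; rewrite yR /=.
rewrite conn_sym in uw; apply: (conn_trans uw); apply: conn_trans xy.
exact: block_conn bC uC xC.
Qed.

Lemma root_self R : R \in Rt -> root R = R.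
Proof.
move=> RR; have bR := root_block RR; have [x xR] := block_n0 bR.
have [_ _ uniq] := root_spec bR; apply/esym/uniq => //.
by apply/existsP; exists x; rewrite xR; apply/existsP; exists x; rewrite xR conn_refl.
Qed.

Definition Sub C c := [set y | [exists x in C :\ c, conn (V :\ c) x y]].

Lemma sepP R C c : sep_vertex e Z R C c ->
  [/\ c \in C, C :\ c != set0, R :\ c != set0 &
    forall x y, x \in C :\ c -> y \in R :\ c -> ~~ conn (V :\ c) x y].
Proof.
case/and4P=> cC C0 R0 /forallP H; split => // x y xC yR.
by move/implyP: (H x) => /(_ xC) /forallP/(_ y)/implyP/(_ yR).
Qed.

Lemma Sub_c C c : c \notin Sub C c.
Proof.
rewrite inE; apply/negP => /existsP[x /andP[xC xc]].
have xnc : x != c by move: xC; rewrite !inE => /andP[].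
by have := conn_memr xc xnc; rewrite !inE eqxx.
Qed.

Lemma Sub_closed C c z z' : z \in Sub C c -> conn (V :\ c) z z' -> z' \in Sub C c.
Proof.
rewrite !inE => /existsP[x /andP[xC xz]] zz'; apply/existsP; exists x.
by rewrite xC; apply: conn_trans zz'.
Qed.

Lemma Sub_C C c x : x \in C :\ c -> x \in Sub C c.
Proof. by move=> xC; rewrite inE; apply/existsP; exists x; rewrite xC conn_refl. Qed.

Lemma Sub_R R C c y : sep_vertex e Z R C c -> y \in R -> y \notin Sub C c.
Proof.
move=> /sepP[_ _ _ H] yR; apply/negP => yS.
have yc : y != c by apply: contraTneq yS => ->; apply: Sub_c.
move: yS; rewrite inE => /existsP[x /andP[xC xy]].
by have := H x y xC; rewrite !inE yc yR xy => /(_ isT).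
Qed.


Definition W C P c := [&& sep_vertex e Z (root C) C c, c \in P &
  [exists x in P :\ c, exists y in root C :\ c, conn (V :\ c) x y]].

Lemma tparentP C P : tparent e Z Rt C P ->
  [/\ block e Z C, C \notin Rt, block e Z P, P != C & exists c, W C P c].
Proof. by case/and5P=> ? ? ? ? /existsP[c ?]; split => //; exists c. Qed.

Lemma tparent_intro C P c : block e Z C -> C \notin Rt -> block e Z P -> P != C ->
  W C P c -> tparent e Z Rt C P.
Proof. by move=> *; apply/and5P; split => //; apply/existsP; exists c. Qed.

Lemma sub_Vc c : V :\ c \subset V.
Proof. by apply/subsetP => w; rewrite !inE => /andP[]. Qed.

Lemma sub_DVc B c w : B \subset V -> w \in B :\ c -> w \in V :\ c.
Proof. by move=> BV; rewrite !inE => /andP[-> /(subsetP BV)]; rewrite inE. Qed.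

Lemma block_Vc B c : block e Z B -> c \notin B -> B \subset V :\ c.
Proof.
move=> bB cB; apply/subsetP => w wB; apply: (sub_DVc (block_sub bB)).
by rewrite !inE wB andbT; apply: contraNneq cB => <-.
Qed.

Lemma parent_exists C : block e Z C -> C \notin Rt -> exists P, tparent e Z Rt C P.
Proof.
move=> bC CR; set R := root C; have [RR scR _] := root_spec bC.
have bR := root_block RR; have RC : R != C by apply: contraNneq CR => <-.
have CV := block_sub bC; have RV := block_sub bR.
case: (set0Pn (C :&: R)) => [[c] | dis].
  rewrite inE => /andP[cC cR]; exists R; apply: (tparent_intro (c := c)) => //.
  have CcR : C :\ c != set0.
    apply/negP => /eqP C0; move: RC => /negP; apply; apply/eqP.
    apply: block_max bC RV (block_tc bR) _; apply/subsetP => w wC.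
    case: (eqVneq w c) => [->//|wc].
    have : w \in C :\ c by rewrite !inE wc.
    by rewrite C0 inE.
  have RcR : R :\ c != set0.
    apply/negP => /eqP R0; move: RC => /negP; apply; apply/eqP/esym.
    apply: block_max bR CV (block_tc bC) _; apply/subsetP => w wR.
    case: (eqVneq w c) => [->//|wc].
    have : w \in R :\ c by rewrite !inE wc.
    by rewrite R0 inE.
  apply/and3P; split => //.
    apply/and4P; split => //; apply/forallP => x; apply/implyP => xC.
    apply/forallP => y; apply/implyP => yR; apply/negP => xy.
    by move: RC => /negP; apply; apply/eqP/esym; apply: blockL bC bR cC cR xC yR xy.
  case/set0Pn: RcR => x xR; apply/existsP; exists x; rewrite xR; apply/existsP; exists x.
  by rewrite xR conn_refl.
have disj w : w \in C -> w \in R -> False.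
  by move=> wC wR; apply: dis; exists w; rewrite inE wC wR.
case/existsP: scR => x0 /andP[x0C /existsP[y0 /andP[y0R x0y0]]].
pose A := [set v | [exists y in R, conn (V :\: C) y v]].
have y0A : y0 \in A by rewrite inE; apply/existsP; exists y0; rewrite y0R conn_refl.
have x0A : x0 \notin A.
  rewrite inE; apply/existsPn => y; apply/negP => /andP[yR yx0].
  have yx : y != x0 by apply/eqP => yx; apply: (disj x0 x0C); rewrite -yx.
  by have := conn_memr yx0 yx; rewrite inE x0C.
rewrite conn_sym in x0y0.
have [u [w [/and3P[uV wV euw] uA wA]]] := cross x0y0 y0A x0A.
have {}uA : u \in A := uA; have {}wA : w \notin A := wA.
move: (uA); rewrite inE => /existsP[y' /andP[y'R y'u]].
have uC : u \notin C.
  case: (eqVneq y' u) => [<-|y'u']; first by apply/negP => /disj; apply.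
  by have := conn_memr y'u y'u'; rewrite inE => /andP[].
have wC : w \in C.
  apply: contraNT wA => wC; rewrite inE; apply/existsP; exists y'; rewrite y'R.
  apply: conn_trans y'u _; apply: conn_edge => //; rewrite inE ?uC ?wC //.
have uc : u != w by apply: contraNneq uC => ->.
have [P [bP sP]] : exists P, block e Z P /\ [set u; w] \subset P.
  apply: block_exists (tc2 euw).
  by apply/subsetP => v /set2P[]->.
have uP : u \in P by apply: (subsetP sP); rewrite !inE eqxx.
have wP : w \in P by apply: (subsetP sP); rewrite !inE eqxx orbT.
have PC : P != C by apply: contraNneq uC => <-.
have y'c : y' != w by apply/eqP => yw; apply: (disj w wC); rewrite -yw.
have VCVc : V :\: C \subset V :\ w.
  by apply/subsetP => v; rewrite !inE => /andP[vC ->]; rewrite andbT; apply: contraNneq vC => ->.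
have uy' : conn (V :\ w) u y' by rewrite conn_sym; apply: conn_sub VCVc y'u.
exists P; apply: (tparent_intro (c := w)) => //. apply/and3P; split => //; last first.
  apply/existsP; exists u; rewrite !inE uc uP /=; apply/existsP; exists y'.
  by rewrite !inE y'c y'R.
apply/and4P; split => //.
- apply/negP => /eqP C0; move: PC => /negP; apply; apply/eqP.
  apply: block_max bC (block_sub bP) (block_tc bP) _; apply/subsetP => v vC.
  case: (eqVneq v w) => [->//|vw].
  have : v \in C :\ w by rewrite !inE vw.
  by rewrite C0 inE.
- by apply/set0Pn; exists y'; rewrite !inE y'c y'R.
apply/forallP => x; apply/implyP => xC; apply/forallP => y; apply/implyP => yR.
apply/negP => xy; move: PC => /negP; apply; apply/eqP.
apply: (blockL bP bC wP wC (x := u) (y := x)); first by rewrite !inE uc.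
  by [].
apply: (conn_trans uy'); rewrite conn_sym; apply: conn_trans xy _.
have wR : w \notin R by apply/negP => /(disj _ wC).
rewrite conn_sym; apply: conn_sub (block_Vc bR wR) _.
apply: tc_conn (block_tc bR) _ _ => //; move: yR; rewrite !inE => /andP[]. by [].
Qed.

Lemma Fstep C P Q c c' : tparent e Z Rt C P -> W C P c -> tparent e Z Rt P Q -> W P Q c' ->
  #|Sub C c| < #|Sub P c'|.
Proof.
move=> tCP WC tPQ WP.
have [bC _ bP _ _] := tparentP tCP.
case/and3P: WC => sepC cP /existsP[xP /andP[xPc /existsP[yR /andP[yRc xy]]]].
have [cC _ _ HC] := sepP sepC.
have rPC : root P = root C by apply/esym; apply: comp_root bC bP cC cP (conn_refl _ _).
case/and3P: WP => sepP' _ _; rewrite rPC in sepP'.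
have [c'P _ _ HP] := sepP sepP'.
have yR' : yR \in root C by move: yRc; rewrite !inE => /andP[].
have cc' : c != c'.
  apply/eqP => cc; subst c'; by have := HP xP yR xPc yRc; rewrite xy.
have c'nS : c' \notin Sub C c.
  apply/negP => c'S.
  have c'Pc : c' \in P :\ c by rewrite !inE c'P andbT eq_sym.
  have c'x : conn (V :\ c) c' xP.
    by apply: (conn_sub (setSD _ (block_sub bP))); apply: tc_del (block_tc bP) c'Pc xPc.
  have := Sub_closed (Sub_closed c'S c'x) xy.
  by rewrite (negbTE (Sub_R sepC yR')).
have c'C : c' \notin C.
  apply: contra c'nS => c'C; apply: Sub_C; by rewrite !inE c'C andbT eq_sym.
have subS : Sub C c \subset Sub P c'.
  apply/subsetP => z; rewrite inE => /existsP[x /andP[xC xz]].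
  have xz' : conn (V :\ c') x z.
    have := conn_restrict (A := Sub C c) xz (fun w xw => Sub_closed (Sub_C xC) xw).
    apply: conn_sub; apply/subsetP => w /setIP[wV wS].
    rewrite in_setD1 (subsetP (sub_Vc c) _ wV) andbT; by apply: contraNneq c'nS => <-.
  rewrite inE; apply/existsP; exists c; rewrite in_setD1 cc' cP /=.
  apply: conn_trans xz'; apply: conn_sub (block_Vc bC c'C) _.
  by apply: tc_conn (block_tc bC) cC _; move: xC; rewrite !inE => /andP[].
apply: proper_card; apply/properP; split => //; exists c; last exact: Sub_c.
by apply: Sub_C; rewrite in_setD1 cc' cP.
Qed.

Local Notation tp := (tpar e Z Rt).

Lemma iter_None k : iter k (obind tp) None = None.
Proof. by elim: k => //= k ->. Qed.

Lemma Sub_lt C c : #|Sub C c| < #|T|.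
Proof.
rewrite -cardsT; apply: proper_card; apply/properP; split; first exact: subsetT.
by exists c; [exact: in_setT | exact: Sub_c].
Qed.

Lemma chain k C P c : tparent e Z Rt C P -> W C P c -> #|T| <= k + #|Sub C c| ->
  iter k (obind tp) (Some P) = None.
Proof.
elim: k C P c => [|k IH] C P c tCP WC.
  by rewrite add0n leqNgt Sub_lt.
move=> Hk; rewrite iterSr /=; rewrite /tpar; case: pickP => [Q tPQ | _]; last exact: iter_None.
have [_ _ _ _ [c' WP]] := tparentP tPQ.
apply: (IH P Q c' tPQ WP); apply: leq_trans Hk _.
by rewrite addSn -addnS leq_add2l; apply: Fstep tCP WC tPQ WP.
Qed.

Lemma Sub_pos C P c : W C P c -> 0 < #|Sub C c|.
Proof.
case/and3P=> /sepP[_ C0 _ _] _ _; case/set0Pn: C0 => x xC.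
by apply/card_gt0P; exists x; apply: Sub_C.
Qed.

Local Notation N := #|{set T}|.

Lemma depth_has C : block e Z C ->
  has (fun n => iter n.+1 (obind tp) (Some C) == None) (iota 0 N).
Proof.
move=> bC; have [x xC] := block_n0 bC.
have T0 : 0 < #|T| by apply/card_gt0P; exists x.
have TN : #|T| <= N by have := @leq_card T _ _ (@set1_inj T); apply.
apply/hasP; exists #|T|.-1.
  by rewrite mem_iota add0n /=; apply: leq_trans TN; rewrite prednK.
rewrite prednK // -(prednK T0) iterSr /= /tpar; case: pickP => [P tCP | _]; last by rewrite iter_None.
have [_ _ _ _ [c WC]] := tparentP tCP.
apply/eqP; apply: (chain tCP WC); rewrite -{1}(prednK T0) -addn1 leq_add2l; exact: Sub_pos WC.
Qed.


Local Notation depth := (depth e Z Rt).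

Lemma depth_spec C : block e Z C ->
  [/\ depth C < N, iter (depth C).+1 (obind tp) (Some C) = None &
      forall j, j < depth C -> iter j.+1 (obind tp) (Some C) != None].
Proof.
move=> bC; have H := depth_has bC; have H' := H.
rewrite has_find size_iota in H'.
split => //.
  by have := nth_find 0 H; rewrite -/(depth C) nth_iota // add0n => /eqP.
move=> j jd; have := before_find 0 jd; rewrite nth_iota ?add0n.
  by move=> ->.
exact: ltn_trans jd H'.
Qed.

Lemma depth_eq C d : block e Z C -> iter d.+1 (obind tp) (Some C) = None ->
  (forall j, j < d -> iter j.+1 (obind tp) (Some C) != None) -> depth C = d.
Proof.
move=> bC h1 h2; have [_ s1 s2] := depth_spec bC.
case: (ltngtP (depth C) d) => [lt|gt|//].
  by have := h2 _ lt; rewrite s1.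
by have := s2 _ gt; rewrite h1.
Qed.

Lemma tpP C q : tp C = Some q -> tparent e Z Rt C q.
Proof. by rewrite /tpar; case: pickP => // q' tq [<-]. Qed.

Lemma depth_par r q : block e Z r -> tp r = Some q -> depth r = (depth q).+1.
Proof.
move=> br rq; have [_ _ bq _ _] := tparentP (tpP rq).
have [_ s1 s2] := depth_spec bq.
apply: depth_eq => //; first by rewrite iterSr /= rq.
case=> [|j] jd; first by rewrite /= rq.
by rewrite iterSr /= rq; apply: s2.
Qed.

Lemma tpar_root C : C \in Rt -> tp C = None.
Proof.
move=> CR; rewrite /tpar; case: pickP => // P tCP.
by have [_ /negP] := tparentP tCP.
Qed.

Lemma depth_root C : C \in Rt -> depth C = 0.
Proof.
move=> CR; apply: depth_eq (root_block CR) _ _ => //=; first by rewrite tpar_root.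
Qed.

Lemma tpar_nonroot C : block e Z C -> C \notin Rt -> exists q, tp C = Some q.
Proof.
move=> bC CR; have [P tCP] := parent_exists bC CR.
by rewrite /tpar; case: pickP => [q _ | none]; [exists q | have := none P; rewrite tCP].
Qed.


Lemma desc_step t p c r : tparent e Z Rt t p -> W t p c -> block e Z r -> r != t ->
  (exists y, y \in r /\ y \in Sub t c) ->
  exists q, [/\ tp r = Some q, block e Z q &
     q = t \/ (q != t /\ exists y, y \in q /\ y \in Sub t c)].
Proof.
move=> ttp Wt br rt [y [yr yS]].
have [bt _ _ _ _] := tparentP ttp.
case/and3P: (Wt) => sepT _ _; have [ct _ _ _] := sepP sepT.
have yc : y != c by apply/eqP => yc; move: yS; rewrite yc (negbTE (Sub_c t c)).
move: (yS); rewrite inE => /existsP[x /andP[xt xy]].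
have xt' : x \in t by move: xt; rewrite !inE => /andP[].
have rtr : root t = root r by apply: comp_root bt br xt' yr (conn_sub (sub_Vc c) xy).
have rR : r \notin Rt.
  apply/negP => rR; have := Sub_R sepT (y := y); rewrite rtr root_self // yr yS.
  by move/(_ isT).
have [q rq] := tpar_nonroot br rR.
have trq := tpP rq; have [_ _ bq _ [d Wr]] := tparentP trq.
case/and3P: Wr => sepR dq _; have [dr _ _ _] := sepP sepR.
exists q; split => //.
have rcS z : z \in r :\ c -> z \in Sub t c.
  move=> zr; apply: (Sub_closed yS); apply: (conn_sub (setSD _ (block_sub br))).
  by apply: tc_del (block_tc br) _ zr; rewrite !inE yc yr.
case: (eqVneq d c) => [dc | dc].
  subst d; have := blockL bt br ct dr xt _ xy; rewrite !inE yc yr => /(_ isT) tr.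
  by move: rt; rewrite tr eqxx.
case: (eqVneq q t) => [->|qt]; first by left.
right; split => //; exists d; split => //; apply: rcS; by rewrite !inE dc dr.
Qed.

Lemma desc n t p c r : tparent e Z Rt t p -> W t p c -> depth r <= n -> block e Z r ->
  r != t -> (exists y, y \in r /\ y \in Sub t c) -> depth t < depth r.
Proof.
move=> ttp Wt; elim: n r => [|n IH] r dr br rt ex;
  have [q [rq bq H]] := desc_step ttp Wt br rt ex; rewrite (depth_par br rq) in dr *.
  by [].
case: H => [->//|[qt ex']].
by apply: ltn_trans (IH q dr bq qt ex') _.
Qed.

Lemma rZ_spec I t0 : block e Z t0 -> meets I t0 ->
  exists r, [/\ rZ e Z Rt I = Some r, block e Z r, meets I r &
     forall t', block e Z t' -> meets I t' -> depth r <= depth t'].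
Proof.
move=> bt0 mt0.
pose P (t : {set T}) := block e Z t && meets I t.
have Pt0 : P t0 by rewrite /P bt0 mt0.
case: (@arg_minnP _ t0 P depth Pt0) => r /andP[br mr] rmin.
have pr : [&& block e Z r, meets I r &
     [forall t', (block e Z t' && meets I t') ==> (depth r <= depth t')]].
  rewrite br mr /=; apply/forallP => t'; apply/implyP; exact: rmin.
rewrite /rZ; case: pickP => [r' /and3P[br' mr' /forallP H] | none]; last by have := none r; rewrite pr.
exists r'; split => // t' bt' mt'; have := H t'; rewrite bt' mt' /=; exact.
Qed.

Lemma seg_facts l (part : T -> 'I_l) I : segment e part Z I ->
  exists i, let S := [set v | part v == i] :\: Z in
  [/\ S \subset V, I \subset S, (forall a b, a \in I -> b \in I -> conn S a b) &
      (forall a w, a \in I -> conn S a w -> w \in I)].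
Proof.
case/existsP=> i /= /existsP[x /andP[xS /eqP HI]]; exists i => /=.
set S := _ :\: Z in xS HI *.
have SV : S \subset V by apply/subsetP => v; rewrite !inE => /andP[].
have IS : I \subset S by rewrite HI; apply/subsetP => v; rewrite inE => /andP[].
have xa a : a \in I -> conn S x a by rewrite HI inE => /andP[].
split => //.
  move=> a b aI bI; apply: conn_trans (xa _ bI); rewrite conn_sym; exact: xa.
move=> a w aI aw; rewrite HI inE; apply/andP; split; last exact: conn_trans (xa _ aI) aw.
case: (eqVneq a w) => [<-|aw']; first exact: (subsetP IS).
exact: conn_memr aw aw'.
Qed.


Lemma keyK l (part : T -> 'I_l) I t : segment e part Z I -> block e Z t -> meets I t ->
  Some t != rZ e Z Rt I ->
  t \notin Rt /\ (forall p c, tparent e Z Rt t p -> W t p c -> c \in I).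
Proof.
move=> sI bt mt nt.
have [r [rZr br mr rmin]] := rZ_spec bt mt.
have rt : r != t by apply: contraNneq nt => rt; rewrite rZr rt.
have [i [SV IS Ic Icl]] := seg_facts sI.
set S := _ :\: Z in SV IS Ic Icl.
case/set0Pn: (mt) => a; rewrite inE => /andP[aI at'].
case/set0Pn: (mr) => b; rewrite inE => /andP[bI br'].
have drt := rmin t bt mt.
split.
  apply/negP => tR; have dt0 := depth_root tR; rewrite dt0 leqn0 in drt.
  have rR : r \in Rt.
    apply/negPn/negP => rR; have [q rq] := tpar_nonroot br rR.
    by rewrite (depth_par br rq) in drt.
  have := comp_root bt br at' br' (conn_sub SV (Ic a b aI bI)).
  by rewrite !root_self // => tr; move: rt; rewrite tr eqxx.
move=> p c ttp Wt; apply/negPn/negP => cI.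
have ac : a != c by apply: contraNneq cI => <-.
have bS : b \in Sub t c.
  rewrite inE; apply/existsP; exists a; rewrite !inE ac at' /=.
  have := conn_restrict (A := I) (Ic a b aI bI) (fun w aw => Icl a w aI aw).
  apply: conn_sub; apply/subsetP => w /setIP[wS wI].
  rewrite in_setD1 (subsetP SV _ wS) andbT; by apply: contraNneq cI => <-.
have := desc (n := depth r) ttp Wt (leqnn _) br rt.
move=> /(_ (ex_intro _ b (conj br' bS))); by rewrite ltnNge drt.
Qed.

Lemma seg_eq l (part : T -> 'I_l) I1 I2 c : segment e part Z I1 -> segment e part Z I2 ->
  c \in I1 -> c \in I2 -> I1 = I2.
Proof.
move=> s1 s2 c1 c2.
have [i [SV IS Ic Icl]] := seg_facts s1; have [j [SV' IS' Ic' Icl']] := seg_facts s2.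
have pi : part c = i by move: (subsetP IS _ c1); rewrite !inE => /andP[_ /eqP].
have pj : part c = j by move: (subsetP IS' _ c2); rewrite !inE => /andP[_ /eqP].
have ij : i = j by rewrite -pi -pj.
rewrite -ij in Icl' Ic'; apply/setP => w; apply/idP/idP => wI.
  by apply: (Icl' c w c2); exact: (Ic c w c1 wI).
by apply: (Icl c w c1); exact: (Ic' c w c2 wI).
Qed.

Lemma main l (part : T -> 'I_l) I1 I2 : segment e part Z I1 -> segment e part Z I2 ->
  I1 != I2 -> body e Z Rt I1 :&: body e Z Rt I2 = set0.
Proof.
move=> s1 s2 ne; apply/setP => t; rewrite !inE; apply/negP.
case/andP=> /and3P[bt m1 n1] /and3P[_ m2 n2].
have [tR K1] := keyK s1 bt m1 n1; have [_ K2] := keyK s2 bt m2 n2.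
have [p tp'] := tpar_nonroot bt tR.
have ttp := tpP tp'; have [_ _ _ _ [c Wt]] := tparentP ttp.
by move: ne; rewrite (seg_eq s1 s2 (K1 _ _ ttp Wt) (K2 _ _ ttp Wt)) eqxx.
Qed.

End G.

Theorem lemma4p10 (T : finType) (e : rel T) (l : nat) (part : T -> 'I_l)
  (Z : {set T}) (Rt : {set {set T}})
  (e_sym : symmetric e) (e_irr : irreflexive e)
  (hRt : valid_roots e Z Rt)
  (I1 I2 : {set T})
  (hI1 : segment e part Z I1) (hI2 : segment e part Z I2)
  (hne : I1 != I2) :
  body e Z Rt I1 :&: body e Z Rt I2 = set0.
Proof. exact: (main e_sym e_irr hRt hI1 hI2 hne). Qed.
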